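(* Let $T\subset\mathbb{Z}_p$ be a finite set with at least two elements, let $\mu_T=\sum_{t\in T}\delta_t$, and let $\gamma_T=\max_{t,t'\in T,\,t\neq t'}\{-\log_p|t-t'|_p\}$. Then $\widehat{\mu_T}(\xi)\neq 0$ for every $\xi\in\mathbb{Q}_p$ with $\xi\notin B(0,p^{\gamma_T+1})$, i.e. with $|\xi|_p>p^{\gamma_T+1}$.
   Context: $\mathbb{Q}_p$ is the field of $p$-adic numbers ($p$ prime) with absolute value $|\cdot|_p$ and $\mathbb{Z}_p$ its ring of integers; $B(0,p^n)=p^{-n}\mathbb{Z}_p=\{x:|x|_p\le p^n\}$. $\delta_t$ is the Dirac measure at $t$. For $x=\sum_{n\ge v}a_np^n$ ($a_n\in\{0,\dots,p-1\}$) its fractional part is $\{x\}=\sum_{n=v}^{-1}a_np^n$; $\chi(x)=e^{2\pi i\{x\}}$, $\chi_y(x)=\chi(yx)$. The Fourier transform of a finite Borel measure $\mu$ is $\widehat\mu(y)=\int\overline{\chi_y(x)}\,d\mu(x)$, so $\widehat{\mu_T}(\xi)=\sum_{t\in T}e^{-2\pi i\{t\xi\}}$. *)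

(* Defs.v *)
From HB Require Import structures.
From mathcomp Require Import all_boot all_order all_algebra.
From mathcomp Require Import all_classical all_reals.
From mathcomp Require Import exp trigo.
From mathcomp Require Import complex.
Set Implicit Arguments. Unset Strict Implicit. Unset Printing Implicit Defensive.
Import Order.TTheory GRing.Theory Num.Theory.

(** ** The ring Z_p as the inverse limit  lim Z/p^n Z.
    An element x is given by the sequence of its residues x n = x mod p^n,
    with 0 <= x n < p^n and x (n+1) = x n (mod p^n). *)
Record Zp_adic (p : nat) := MkZp {
  zres :> nat -> nat;
  zres_lt : forall n, zres n < p ^ n;
  zres_coh : forall n, zres n.+1 %% p ^ n = zres n }.

Lemma Zp_pexp_gt0 p (x : Zp_adic p) n : 0 < p ^ n.
Proof. exact: leq_ltn_trans (zres_lt x n). Qed.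

Lemma subcoh_aux (a b d D : nat) : 0 < d -> d %| D -> b <= D ->
  (a + (D - b)) %% d = (a %% d + (d - b %% d)) %% d.
Proof.
move=> d0 /dvdnP[k ->] bD.
apply/eqP; rewrite -(eqn_modDr b) -addnA subnK //.
rewrite -addnA.
have H : (d - b %% d + b) %% d = 0.
  by rewrite -modnDmr subnK ?modnn // ltnW // ltn_mod.
rewrite -[X in _ == X]modnDm H addn0 modn_mod.
by rewrite modn_mod addnC modnMDl.
Qed.

Section Zp_ops.
Variable p : nat.

Lemma zmul_lt (x y : Zp_adic p) n : (x n * y n) %% p ^ n < p ^ n.
Proof. by rewrite ltn_mod (Zp_pexp_gt0 x). Qed.

Lemma zmul_coh (x y : Zp_adic p) n :
  (x n.+1 * y n.+1) %% p ^ n.+1 %% p ^ n = (x n * y n) %% p ^ n.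
Proof.
rewrite expnS modn_dvdm ?dvdn_mull //.
by rewrite -modnMm (zres_coh x) (zres_coh y).
Qed.

Lemma zsub_lt (x y : Zp_adic p) n : (x n + (p ^ n - y n)) %% p ^ n < p ^ n.
Proof. by rewrite ltn_mod (Zp_pexp_gt0 x). Qed.

Lemma zsub_coh (x y : Zp_adic p) n :
  (x n.+1 + (p ^ n.+1 - y n.+1)) %% p ^ n.+1 %% p ^ n
  = (x n + (p ^ n - y n)) %% p ^ n.
Proof.
have Hd : p ^ n %| p ^ n.+1 by rewrite expnS dvdn_mull.
rewrite modn_dvdm // subcoh_aux ?(Zp_pexp_gt0 x) ?(ltnW (zres_lt y _)) //.
by rewrite (zres_coh x) (zres_coh y).
Qed.

Definition zmul (x y : Zp_adic p) : Zp_adic p := MkZp (@zmul_lt x y) (@zmul_coh x y).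
Definition zsub (x y : Zp_adic p) : Zp_adic p := MkZp (@zsub_lt x y) (@zsub_coh x y).

Definition zis0 (x : Zp_adic p) : Prop := forall n, x n = 0.

(** p-adic valuation v(x) of x in Z_p, x <> 0: the least n with
    x (n+1) <> 0, i.e. x = 0 mod p^n but x <> 0 mod p^(n+1).
    Then |x|_p = p^(-v(x)) and -log_p |x|_p = v(x).
    (Junk value 0 for x = 0; it is never used on 0 below.) *)
Definition zval (x : Zp_adic p) : nat :=
  match pselect (exists n, (fun m => x m.+1 != 0) n) with
  | left H => ex_minn H
  | right _ => 0
  end.

Local Open Scope ring_scope.

(** ** Q_p = Z_p[1/p]: every element of Q_p has the form p^(-k) * u with
    k : nat and u in Z_p. An element of Qp_adic p is such a pair (k, u),
    standing for p^(-k) u. *)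
Record Qp_adic := MkQp { qexp : nat; qint : Zp_adic p }.

Definition qabs (R : realType) (xi : Qp_adic) : R :=
  if `[< zis0 (qint xi) >] then 0
  else (p%:R : R) ^ ((qexp xi)%:Z - (zval (qint xi))%:Z).

Definition zqmul (t : Zp_adic p) (xi : Qp_adic) : Qp_adic := MkQp (qexp xi) (zmul t (qint xi)).

(** the fractional part {xi} of xi = p^(-k) u, i.e. (u mod p^k) / p^k *)
Definition qfrac (R : realType) (xi : Qp_adic) : R :=
  ((qint xi) (qexp xi))%:R / (p ^ qexp xi)%:R.

End Zp_ops.

Definition expi (R : realType) (x : R) : R[i] := (cos x +i* sin x)%C.

Local Open Scope ring_scope.

Definition muT_hat (R : realType) (p m : nat) (t : 'I_m -> Zp_adic p) (xi : Qp_adic p)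
  : R[i] :=
  \sum_(i < m) expi (- (2 * pi * qfrac R (zqmul (t i) xi))).

(** gamma_T = max_{t <> t'} (-log_p |t - t'|_p) = max_{t <> t'} v(t - t'). *)
Definition gammaT (p m : nat) (t : 'I_m -> Zp_adic p) : nat :=
  (\max_(i < m) \max_(j < m | i != j) zval (zsub (t i) (t j)))%N.

(* Main.v *)
Require Import Defs.
From HB Require Import structures.
From mathcomp Require Import all_boot all_order all_algebra.
From mathcomp Require Import all_classical all_reals.
From mathcomp Require Import exp trigo.
From mathcomp Require Import complex.
From mathcomp Require Import all_field zify.
Import Order.TTheory GRing.Theory Num.Theory.
Local Open Scope ring_scope.

Definition PhiP (p n : nat) : {poly rat} := \sum_(j < p) 'X^(j * p ^ n)%N.

Lemma PhiP_horner (F : numFieldType) (p n : nat) (z : F) :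
  (map_poly ratr (PhiP p n)).[z] = \sum_(j < p) (z ^+ (p ^ n)) ^+ j.
Proof.
rewrite /PhiP rmorph_sum horner_sum; apply: eq_bigr => j _.
by rewrite rmorphXn /= map_polyX hornerXn mulnC exprM.
Qed.

Lemma PhiP_root (F : numFieldType) (p n : nat) (z : F) :
  z ^+ (p ^ n) != 1 -> (z ^+ (p ^ n)) ^+ p = 1 ->
  root (map_poly ratr (PhiP p n)) z.
Proof.
move=> w1 wp; rewrite /root PhiP_horner.
have := subrX1 (z ^+ (p ^ n)) p; rewrite wp subrr => /esym/eqP.
by rewrite mulf_eq0 subr_eq0 (negbTE w1).
Qed.

Lemma size_PhiP (p n : nat) : (size (PhiP p n) <= p.-1 * p ^ n + 1)%N.
Proof.
apply: leq_trans (size_sum _ _ _) _.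
apply/bigmax_leqP => j _; rewrite size_polyXn addn1 ltnS leq_mul2r.
rewrite -ltnS prednK ?ltn_ord ?orbT //; exact: leq_ltn_trans (leq0n j) (ltn_ord j).
Qed.

Lemma PhiP_neq0 (p n : nat) : (0 < p)%N -> PhiP p n != 0.
Proof.
move=> p0; apply/eqP => H.
have := congr1 (fun q => q.[1]) H.
rewrite /PhiP horner_sum hornerC.
under eq_bigr => j _ do rewrite hornerXn expr1n.
by rewrite sumr_const card_ord => /eqP; rewrite pnatr_eq0 => /eqP p00; rewrite p00 in p0.
Qed.

Lemma cyc_dvd (p n : nat) (F : numFieldType) (z : F) (q : {poly rat}) :
  prime p -> z ^+ (p ^ n) != 1 -> (z ^+ (p ^ n)) ^+ p = 1 ->
  root (map_poly ratr q) z -> PhiP p n %| q.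
Proof.
move=> pr w1 wp qz.
have p0 := prime_gt0 pr.
have N0 : (0 < p ^ n.+1)%N by rewrite expn_gt0 p0.
have [c prim_c] := C_prim_root_exists N0.
have [pf [Dpf mon_pf] dv_pf] := minCpolyP c.
have pfPhi : pf %| PhiP p n.
  rewrite -dv_pf; apply: PhiP_root.
    by rewrite -(prim_order_dvd prim_c) dvdn_Pexp2l ?ltnn // prime_gt1.
  by rewrite -exprM -expnSr prim_expr_order.
have szpf : size pf = (p.-1 * p ^ n + 1)%N.
  rewrite -(size_map_poly (@ratr algC)) -Dpf (minCpoly_cyclotomic prim_c).
  by rewrite size_cyclotomic totient_pfactor // addn1.
have epf : pf %= PhiP p n.
  rewrite -dvdp_size_eqp // eqn_leq szpf size_PhiP /= -szpf.
  by rewrite andbT; apply: dvdp_leq => //; exact: PhiP_neq0.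
rewrite -(eqp_dvdl q epf).
pose g := gcdp pf q.
have gz : root (map_poly ratr g) z.
  rewrite gcdp_map root_gcd qz andbT.
  have e2 : map_poly (@ratr F) pf %= map_poly (@ratr F) (PhiP p n) by rewrite eqp_map.
  rewrite (eqp_root e2).
  exact: PhiP_root.
have g0 : g != 0 by rewrite gcdp_eq0 negb_and monic_neq0.
have szg : size (map_poly (@ratr algC) g) != 1%N.
  rewrite size_map_poly; apply/negP => /size_poly1P [a a0 ga].
  by move: gz; rewrite ga map_polyC rootC fmorph_eq0 (negbTE a0).
have [y yr] := closed_rootP _ szg.
have ypf : root (minCpoly c) y.
  rewrite Dpf; apply: (root_dvdp _ yr); rewrite dvdp_map; exact: dvdp_gcdl.
have prim_y : (p ^ n.+1).-primitive_root y.
  by move: ypf; rewrite (minCpoly_cyclotomic prim_c) root_cyclotomic.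
have [pf' [Dpf' _] dv_pf'] := minCpolyP y.
have epf' : pf' = pf.
  apply: (map_poly_inj (@ratr algC)); rewrite -Dpf -Dpf'.
  rewrite (minCpoly_cyclotomic prim_c) (minCpoly_cyclotomic prim_y).
  by rewrite -(Cintr_Cyclotomic prim_c) -(Cintr_Cyclotomic prim_y).
apply: dvdp_trans (dvdp_gcdr pf q).
rewrite -epf' -dv_pf' epf'; exact: yr.
Qed.

Lemma coef_mulPhi (p n : nat) (Q : {poly rat}) (b j0 : nat) :
  (size Q <= p ^ n)%N -> (b < p ^ n)%N -> (j0 < p)%N ->
  (Q * PhiP p n)`_(b + j0 * p ^ n)%N = Q`_b.
Proof.
move=> sQ bN j0p; set N := (p ^ n)%N in sQ bN *.
rewrite /PhiP mulr_sumr coef_sum (bigD1 (Ordinal j0p)) //= coefMXn.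
have -> : (b + j0 * N < j0 * N)%N = false by lia.
rewrite addnK big1 ?addr0 // => j /eqP hj; rewrite coefMXn.
case: ifP => // /negbT; rewrite -leqNgt => hle.
apply: nth_default; apply: leq_trans sQ _.
have hj' : nat_of_ord j <> j0 by move=> e; apply: hj; apply: val_inj.
have jle : (j < j0)%N.
  have : (j * N < j0.+1 * N)%N by rewrite mulSn; lia.
  rewrite ltn_mul2r => /andP[_]; lia.
have : (j.+1 * N <= j0 * N)%N by rewrite leq_mul2r jle orbT.
rewrite mulSn; lia.
Qed.

Lemma comb (p n m : nat) (c : 'I_m -> nat) : prime p -> (0 < m)%N ->
  (forall i, c i < p ^ n.+1)%N ->
  (forall i j, (c i %% p ^ n = c j %% p ^ n)%N -> i = j) ->
  ~~ (PhiP p n %| \sum_(i < m) 'X^(c i)).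
Proof.
move=> pr m0 cb cinj; apply/negP => /dvdpP [Q EQ].
have p1 := prime_gt1 pr.
set N := (p ^ n)%N.
set P := \sum_(i < m) 'X^(c i) in EQ.
have N0 : (0 < N)%N by rewrite expn_gt0 ltnW.
have coefP k : P`_k = \sum_(i < m) ((c i == k)%:R).
  by rewrite coef_sum; apply: eq_bigr => i _; rewrite coefXn eq_sym.
have szP : (size P <= p * N)%N.
  apply: leq_trans (size_sum _ _ _) _; apply/bigmax_leqP => i _.
  by rewrite size_polyXn -expnS.
have szPhi : ((p.-1) * N < size (PhiP p n))%N.
  have := @coef_mulPhi p n 1 0 p.-1.
  rewrite size_poly1 N0 mul1r add0n coef1 /= => /(_ isT isT).
  rewrite prednK; last exact: ltnW.
  move=> /(_ (leqnn p)) H; rewrite ltnNge; apply/negP => hs.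
  by move: H; rewrite nth_default.
pose i0 := Ordinal m0.
have Pc0 : P`_(c i0) != 0.
  rewrite coefP (bigD1 i0) //= eqxx; apply: lt0r_neq0; apply: lt_le_trans (@ltr01 rat) _.
  by rewrite lerDl sumr_ge0 // => i _; exact: ler0n.
have Q0 : Q != 0 by apply: contraNneq Pc0 => Q00; rewrite EQ Q00 mul0r coef0.
have Phi0 : PhiP p n != 0 by apply/eqP => E; rewrite E in szPhi; rewrite size_poly0 in szPhi.
have szQ : (size Q <= N)%N.
  have := size_mul Q0 Phi0; rewrite -EQ => E.
  have : (p * N = p.-1 * N + N)%N by rewrite addnC -mulSn prednK // ltnW.
  move=> HH; move: HH E szP szPhi; move: (p.-1 * N)%N (p * N)%N => x y; clearbody N; move: (size P) (size Q) (size (PhiP p n)) => a1 a2 a3; lia.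
have cdec := divn_eq (c i0) N.
set b := (c i0 %% N)%N in cdec.
set j0 := (c i0 %/ N)%N in cdec.
have bN : (b < N)%N by rewrite ltn_mod.
have j0p : (j0 < p)%N by rewrite ltn_divLR // -expnS.
have Qb : Q`_b != 0.
  by move: Pc0; rewrite cdec addnC EQ coef_mulPhi.
pose j1 := if j0 == 0%N then 1%N else 0%N.
have j1p : (j1 < p)%N by rewrite /j1; case: ifP => _; lia.
have j1j0 : j1 != j0 by rewrite /j1; case: ifP => /eqP; lia.
have : P`_(b + j1 * N)%N != 0 by rewrite EQ coef_mulPhi.
rewrite coefP; case: (pickP (fun i => c i == (b + j1 * N)%N)) => [i /eqP ci | none]; last first.
  by rewrite big1 ?eqxx // => i _; rewrite none.
move=> _.
have ii0 : i = i0.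
  apply: cinj; rewrite ci -/N -/b addnC modnMDl modn_small //.
move: ci; rewrite ii0 cdec addnC => /eqP; rewrite eqn_add2l eqn_pmul2r //.
by rewrite eq_sym (negbTE j1j0).
Qed.

Section C.
Variable R : realType.

Lemma expiD (x y : R) : expi (x + y) = expi x * expi y.
Proof.
rewrite /expi cosD sinD; apply/eqP; rewrite eq_complex /=; apply/andP; split; apply/eqP.
  by [].
by rewrite addrC.
Qed.

Lemma expi0 : expi (0 : R) = 1.
Proof. by rewrite /expi cos0 sin0. Qed.

Lemma expiMn (x : R) k : expi (x *+ k) = expi x ^+ k.
Proof.
elim: k => [|k IH]; first by rewrite mulr0n expi0.
by rewrite mulrS expiD IH exprS.
Qed.

Lemma expiN2pi : expi (- (2 * pi) : R) = 1.
Proof.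
by rewrite /expi cosN sinN mulr_natl cos2pi sin2pi oppr0.
Qed.

Lemma expi_neq1 (p : nat) : (1 < p)%N -> expi (- (2 * pi / p%:R) : R) != 1.
Proof.
move=> p1; rewrite /expi cosN sinN; apply/negP; rewrite eq_complex /= => /andP[/eqP hc /eqP hs].
have hp0 : (0 : R) < p%:R by rewrite ltr0n; lia.
case: (ltngtP p 2) => [|hp3|hp2].
- lia.
- have : 0 < sin (2 * pi / p%:R : R).
    apply: sin_gt0_pi; apply/andP; split.
      by rewrite divr_gt0 // mulr_gt0 // pi_gt0.
    by rewrite ltr_pdivrMr // [pi * _]mulrC ltr_pM2r ?pi_gt0 // ltr_nat.
  by move: hs => /eqP; rewrite oppr_eq0 => /eqP ->; rewrite ltxx.
- move: hc; rewrite hp2 [2 * pi]mulrC mulfK ?pnatr_eq0 // cospi => /eqP.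
  by rewrite -subr_eq0 -opprD oppr_eq0 -mulr2n pnatr_eq0.
Qed.
End C.

Lemma mod_cancel (a b w P : nat) : coprime P w ->
  (a * w = b * w %[mod P])%N -> (a = b %[mod P])%N.
Proof.
move=> cP.
suff H : forall a b, (b <= a)%N -> (a * w = b * w %[mod P])%N -> (a = b %[mod P])%N.
  move=> E; case: (leqP b a) => h; first exact: H.
  by apply: esym; apply: H; [exact: ltnW | exact: esym].
move=> {}a {}b le /eqP; rewrite eqn_mod_dvd ?leq_mul2r ?le ?orbT // -mulnBl Gauss_dvdl //.
by rewrite -eqn_mod_dvd // => /eqP.
Qed.

Section Zp.
Variable p : nat.

Lemma zcoh (x : Zp_adic p) e k : (e <= k)%N -> (x k %% p ^ e = x e)%N.
Proof.
elim: k => [|k IH].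
  by rewrite leqn0 => /eqP ->; rewrite modn_small // zres_lt.
rewrite leq_eqVlt => /orP[/eqP -> | ]; first by rewrite modn_small // zres_lt.
rewrite ltnS => hek; rewrite -(IH hek) -(zres_coh x k) modn_dvdm //.
exact: dvdn_exp2l.
Qed.

Lemma zsub0 (x y : Zp_adic p) n : zsub x y n = 0%N -> x n = y n.
Proof.
rewrite /zsub /=.
have ha := zres_lt x n; have hb := zres_lt y n.
case: (leqP (y n) (x n)) => h.
  have -> : (x n + (p ^ n - y n) = (x n - y n) + p ^ n)%N by lia.
  rewrite modnDr modn_small; lia.
rewrite modn_small; lia.
Qed.

Lemma zext (x y : Zp_adic p) : (forall n, x n = y n) -> x = y.
Proof.
case: x y => f fl fc [g gl gc] /= H.
have E : f = g by apply: funext.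
subst g; congr MkZp; apply: Prop_irrelevance.
Qed.

Lemma zval_spec (x : Zp_adic p) : (exists n, x n != 0%N) ->
  x (zval x).+1 != 0%N /\ x (zval x) = 0%N.
Proof.
move=> [n hn].
have ex : exists n, (fun m => x m.+1 != 0%N) n.
  case: n hn => [|n] hn; last by exists n.
  by move: (zres_lt x 0); rewrite expn0 ltnS leqn0 (negbTE hn).
rewrite /zval; case: pselect => [H|//]; case: ex_minnP => v hv hmin.
split => //; case: v hv hmin => [|v] hv hmin.
  by apply/eqP; move: (zres_lt x 0); rewrite expn0 ltnS leqn0.
apply/eqP; apply: contraT => hv'; have := hmin v hv'; lia.
Qed.
End Zp.

Theorem lemma2p5 (R : realType) (p : nat) (hp : prime p)
  (m : nat) (hm : (2 <= m)%N) (t : 'I_m -> Zp_adic p) (ht : injective t)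
  (xi : Qp_adic p) :
  (p%:R : R) ^ ((gammaT t)%:Z + 1) < qabs R xi ->
  muT_hat R t xi != 0.
Proof.
have p1 := prime_gt1 hp; have p0 := prime_gt0 hp.
have hp1R : (1 : R) < p%:R by rewrite ltr1n.
rewrite /qabs; case: asboolP => [_ | nz].
  by rewrite ltNge exprz_ge0 ?ler0n.
rewrite ltr_eXz2l // => Hlt.
set k := qexp xi in Hlt *; set u := qint xi in nz Hlt *.
have [v1 v0] : u (zval u).+1 != 0%N /\ u (zval u) = 0%N.
  apply: zval_spec; apply: contra_notP nz => NE n; apply/eqP.
  by apply/negPn/negP => hn; apply: NE; exists n.
set v := zval u in v1 v0 Hlt.
have hk : (gammaT t + v + 2 <= k)%N by clear -Hlt; lia.
pose n := k.-1.
have kE : k = n.+1 by rewrite /n; clear -hk; lia.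
pose c (i : 'I_m) := ((t i) k * u k %% p ^ k)%N.
pose z : R[i] := expi (- (2 * pi / (p ^ k)%:R)).
have pk0 : (p ^ k)%:R != 0 :> R by rewrite pnatr_eq0 expn_eq0 negb_and; lia.
have Hsum : muT_hat R t xi = \sum_(i < m) z ^+ c i.
  rewrite /muT_hat; apply: eq_bigr => i _; rewrite /qfrac /= -expiMn.
  congr expi; rewrite mulNrn -[_ *+ c i]mulr_natr; congr (- _).
  by rewrite mulrA mulrAC.
have zw : z ^+ (p ^ n) = expi (- (2 * pi / p%:R)).
  rewrite -expiMn; congr expi; rewrite mulNrn -[_ *+ (p ^ n)%N]mulr_natr; congr (- _).
  rewrite kE expnS natrM invfM mulrA -mulrA mulVf ?mulr1 //.
  by rewrite pnatr_eq0 expn_eq0 negb_and; lia.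
have w1 : z ^+ (p ^ n) != 1 by rewrite zw expi_neq1.
have wp : (z ^+ (p ^ n)) ^+ p = 1.
  rewrite zw -expiMn mulNrn -[_ *+ p]mulr_natr mulfVK ?pnatr_eq0 -?lt0n //.
  exact: expiN2pi.
have cb : forall i, (c i < p ^ n.+1)%N by move=> i; rewrite -kE ltn_mod expn_gt0 p0.
have cinj : forall i j, (c i %% p ^ n = c j %% p ^ n)%N -> i = j.
  move=> i j E; apply/eqP; apply: contraT => nij; exfalso.
  have tij : t i <> t j by move=> /ht /eqP; rewrite (negbTE nij).
  have [n0 hn0] : exists n0, zsub (t i) (t j) n0 != 0%N.
    apply: contra_notP tij => NE; apply: zext => n1; apply: zsub0.
    by apply/eqP; apply/negPn/negP => h; apply: NE; exists n1.
  have [e1 _] := @zval_spec p _ (ex_intro _ n0 hn0).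
  set e := zval (zsub (t i) (t j)) in e1.
  have te : t i e.+1 <> t j e.+1.
    move=> h; move: e1; rewrite /= h subnKC ?modnn //; exact: ltnW (zres_lt _ _).
  have eg : (e <= gammaT t)%N.
    rewrite /gammaT; apply: leq_trans (leq_bigmax i).
    exact: (leq_bigmax_cond (F := fun j => zval (zsub (t i) (t j))) j nij).
  have hnk : (p ^ n %| p ^ k)%N by rewrite dvdn_exp2l // kE.
  have E2 : (t i k * u k = t j k * u k %[mod p ^ n])%N.
    by move: E; rewrite /c !modn_dvdm.
  have Uv : (p ^ v %| u k)%N.
    have hvk : (v <= k)%N by clear -hk; lia.
    by rewrite /dvdn (@zcoh p u v k) ?v0.
  case/dvdnP: Uv => w Uw.
  have pw : ~~ (p %| w)%N.
    apply/negP => /dvdnP [w' ww']; move: v1; rewrite -(@zcoh p u v.+1 k); last by clear -hk; lia.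
    by rewrite Uw ww' -mulnA -expnS modnMl.
  have cw : coprime (p ^ e.+1) w by rewrite coprimeXl // prime_coprime.
  have E3 : (t i k * w = t j k * w %[mod p ^ e.+1])%N.
    have E4 : (t i k * w * p ^ v = t j k * w * p ^ v %[mod p ^ e.+1 * p ^ v])%N.
      have hd : (p ^ e.+1 * p ^ v %| p ^ n)%N by rewrite -expnD dvdn_exp2l //; clear -hk eg kE; lia.
      by rewrite -!mulnA -Uw -(modn_dvdm _ hd) E2 modn_dvdm.
    apply/eqP; rewrite -(@eqn_pmul2r (p ^ v)) ?expn_gt0 ?p0 //.
    by rewrite !muln_modl E4.
  have := @mod_cancel _ _ _ _ cw E3.
  have hek : (e.+1 <= k)%N by clear -hk eg; lia.
  by rewrite (@zcoh p (t i) e.+1 k hek) (@zcoh p (t j) e.+1 k hek).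
apply/negP => /eqP S0.
have rz : root (map_poly ratr (\sum_(i < m) 'X^(c i))) z.
  rewrite /root rmorph_sum horner_sum.
  under eq_bigr do rewrite rmorphXn /= map_polyX hornerXn.
  by rewrite -Hsum S0.
have := @cyc_dvd p n _ z _ hp w1 wp rz.
by move/negP: (@comb p n m c hp (ltnW hm) cb cinj).
Qed.
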